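(* Let $g,r,d$ and ramification sequences $\alpha,\beta$ satisfy $\rho(g,r,d,\alpha,\beta)=0$. If $r\ge2$ and $\alpha_r+\beta_r+g-d+r>r+1$, then there is a non-identity element of the EH group (one of the generators $\pi_{t,a}$) which moves at most $\tfrac14$ of the elements of $YT(g,r,d,\alpha,\beta)$.
   Context: Ramification sequences: $\alpha=(\alpha_0,\dots,\alpha_r)$ integers with $d-r\ge\alpha_0\ge\cdots\ge\alpha_r\ge0$, $|\alpha|=\sum\alpha_i$; $g-d+r\ge0$; $\rho(g,r,d,\alpha,\beta)=g-(r+1)(g-d+r)-|\alpha|-|\beta|$. Skew diagram $\sigma(g,r,d,\alpha,\beta)$ (with $m=g-d+r$): rows $k=1,\dots,r+1$ numbered top to bottom, row $k$ consisting of boxes $(k,c)$ with $\alpha_0-\alpha_{r+1-k}<c\le\alpha_0+m+\beta_{k-1}$ (columns numbered left to right); it has $g$ boxes when $\rho=0$. $YT(g,r,d,\alpha,\beta)$ is the set of standard Young tableaux of this shape: bijective fillings with $1,\dots,g$ strictly increasing along rows (left to right) and columns (top to bottom). The distance between boxes $(i,j),(i',j')$ is $|i-i'|+|j-j'|$. For $1\le t<g$ and $a>0$, $\pi_{t,a}$ is the permutation of $YT(g,r,d,\alpha,\beta)$ exchanging the entries $t$ and $t+1$ in every tableau where they lie in different rows and different columns at distance exactly $a$, and fixing all other tableaux. The EH group is the subgroup of the symmetric group on $YT(g,r,d,\alpha,\beta)$ generated by all $\pi_{t,a}$. An element moves a tableau if it does not fix it. *)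

(* Defs.v *)
From mathcomp Require Import all_boot all_order all_algebra.
Set Implicit Arguments. Unset Strict Implicit. Unset Printing Implicit Defensive.
Import GRing.Theory Num.Theory.

(* Ramification sequence alpha = (alpha 0, ..., alpha r) (values of alpha at
   indices > r are irrelevant):  d - r >= alpha_0 >= ... >= alpha_r >= 0.
   "d - r >= alpha_0" is stated as alpha_0 + r <= d (integer reading). *)
Definition ramif (r d : nat) (alpha : nat -> nat) : Prop :=
  alpha 0 + r <= d /\ (forall i, i < r -> alpha i.+1 <= alpha i).

Definition wt (r : nat) (alpha : nat -> nat) : nat := \sum_(i < r.+1) alpha i.

Definition rho (g r d : nat) (alpha beta : nat -> nat) : int :=
  (g%:Z - (r.+1)%:Z * (g%:Z - d%:Z + r%:Z) - (wt r alpha)%:Z - (wt r beta)%:Z)%R.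

(* m = g - d + r (as a nat; meaningful under the hypothesis g - d + r >= 0) *)
Definition mm (g r d : nat) : nat := g + r - d.

(* Number of columns of the bounding box: columns are 1 .. alpha_0 + m + beta_0,
   column c is encoded as the ordinal with value c. *)
Definition ncol (g r d : nat) (alpha beta : nat -> nat) : nat :=
  (alpha 0 + mm g r d + beta 0).+1.

(* A box (k, c): row k (1-based) is encoded by the ordinal of value k-1. *)
Definition box (g r d : nat) (alpha beta : nat -> nat) : finType :=
  ('I_(r.+1) * 'I_(ncol g r d alpha beta))%type.

(* Box (k,c) lies in sigma(g,r,d,alpha,beta) iff
   alpha_0 - alpha_(r+1-k) < c <= alpha_0 + m + beta_(k-1). *)
Definition inshape g r d alpha beta (b : box g r d alpha beta) : bool :=
  let k := val b.1 in let c := val b.2 in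
  (alpha 0 - alpha (r - k) < c) && (c <= alpha 0 + mm g r d + beta k).

(* A filling by 1..g is encoded by T : 'I_g -> box, with T i the box
   containing the entry i+1. *)
Definition tableau (g r d : nat) (alpha beta : nat -> nat) : finType :=
  {ffun 'I_g -> box g r d alpha beta}.

Definition is_syt g r d alpha beta (T : tableau g r d alpha beta) : bool :=
  [&& injectiveb T,
      [forall i, inshape (T i)],
      [forall b : box g r d alpha beta, inshape b ==> (b \in codom T)],
      [forall i, forall j,
         ((T i).1 == (T j).1) && (val (T i).2 < val (T j).2) ==> (val i < val j)] &
      [forall i, forall j,
         ((T i).2 == (T j).2) && (val (T i).1 < val (T j).1) ==> (val i < val j)]].

Definition YT g r d alpha beta : {set tableau g r d alpha beta} :=
  [set T | is_syt T].

Definition pos g r d alpha beta (T : tableau g r d alpha beta) (t : nat)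
  : box g r d alpha beta :=
  match (insub t.-1 : option 'I_g) with Some k => T k | None => (ord0, ord0) end.

Definition absd (x y : nat) : nat := (x - y) + (y - x).

Definition dist g r d alpha beta (b b' : box g r d alpha beta) : nat :=
  absd (val b.1) (val b'.1) + absd (val b.2) (val b'.2).

Definition piEH g r d alpha beta (t a : nat) (T : tableau g r d alpha beta)
  : tableau g r d alpha beta :=
  let p := pos T t in let q := pos T t.+1 in
  if (p.1 != q.1) && (p.2 != q.2) && (dist p q == a) then
    [ffun k : 'I_g => if val k == t.-1 then q else if val k == t then p else T k]
  else T.

(* Main.v *)
Require Import Defs.
From mathcomp Require Import all_boot all_order all_algebra.
From mathcomp Require Import zify.
Set Implicit Arguments. Unset Strict Implicit. Unset Printing Implicit Defensive.

Definition grp (B : eqType) (I : pred B) (p q b : B) : nat :=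
  if I b then (if b == p then 1 else 0) else (if b == q then 2 else 3).

Lemma grp_mono (B : eqType) (le : rel B) (I : pred B) (p q : B) :
  (forall b b', le b b' -> I b' -> I b) ->
  (forall b, le p b -> b != p -> ~~ I b) ->
  (forall b, le b q -> b != q -> I b) ->
  forall b b', le b b' -> b != b' -> grp I p q b <= grp I p q b'.
Proof.
move=> Hd Hp Hq b b' lbb nbb; rewrite /grp.
case Ib': (I b').
  have Ib := Hd _ _ lbb Ib'; rewrite Ib.
  case: (b' =P p) => [eb'|nb']; first by case: (b == p).
  case: (b =P p) => [eb|] //; exfalso; subst b.
  by move: (Hp _ lbb (introN eqP nb')); rewrite Ib'.
case: (b' =P q) => [eb'|nb']; last by case: (I b); case: (b == p); case: (b == q).
subst b'; rewrite (Hq _ lbb nbb); by case: (b == p).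
Qed.

Section X. End X.

Definition keyf (B : eqType) (I : pred B) (p q : B) (lex : B -> nat) (K : nat) (b : B) : nat :=
  grp I p q b * K + lex b.

Definition Lbuild (B : finType) (shp I : pred B) (p q : B) (lex : B -> nat) (K : nat) : seq B :=
  let R := fun x y => keyf I p q lex K x <= keyf I p q lex K y in
  sort R (enum [pred b | shp b && I b && (b != p)]) ++
  p :: q :: sort R (enum [pred b | shp b && ~~ I b && (b != q)]).

Lemma pairwise_idx (B : eqType) (f : B -> nat) (L : seq B) (x0 : B) i j :
  pairwise (fun x y => f x <= f y) L -> i < size L -> j < size L ->
  f (nth x0 L i) < f (nth x0 L j) -> i < j.
Proof.
move=> /pairwiseP H hi hj hf; case: (ltngtP i j) => // hji.
  by have := H x0 j i hj hi hji; rewrite leqNgt hf.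
by subst j; rewrite ltnn in hf.
Qed.

Lemma Lbuild_props (B : finType) (shp I : pred B) (p q : B) (lex : B -> nat) (K : nat) :
  (forall b, lex b < K) -> shp p -> shp q -> I p -> ~~ I q ->
  let L := Lbuild shp I p q lex K in
  let n := #|[pred b | shp b && I b]| in
  [/\ uniq L, (forall b, (b \in L) = shp b), size L = #|shp|,
      0 < n & [/\ nth p L n.-1 = p, nth p L n = q &
      pairwise (fun x y => keyf I p q lex K x <= keyf I p q lex K y) L]].
Proof.
move=> hK sp sq Ip Iq L n.
have pq : p != q by apply/eqP => e; subst q; rewrite Ip in Iq.
set R := (fun x y => keyf I p q lex K x <= keyf I p q lex K y).
set L0 := sort R (enum [pred b | shp b && I b && (b != p)]).
set L3 := sort R (enum [pred b | shp b && ~~ I b && (b != q)]).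
have eL : L = L0 ++ p :: q :: L3 by [].
have m0 b : (b \in L0) = [&& shp b, I b & b != p] by rewrite mem_sort mem_enum inE andbA.
have m3 b : (b \in L3) = [&& shp b, ~~ I b & b != q] by rewrite mem_sort mem_enum inE andbA.
have memL b : (b \in L) = shp b.
  rewrite eL mem_cat !in_cons m0 m3.
  case: (b =P p) => [->|_]; first by rewrite sp orbT.
  case: (b =P q) => [->|_]; first by rewrite sq !orbT.
  by case: (shp b); case: (I b).
have uL : uniq L.
  rewrite eL cat_uniq /= !in_cons m3 (negbTE pq) /= !sort_uniq !enum_uniq /=.
  rewrite !m0 m3 Ip (negbTE Iq) eqxx !andbF /= andbT eqxx andbF andbT.
  apply/hasPn => b; rewrite m3 m0 => /and3P[_ /negbTE -> _].
  by rewrite andbF.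
have sL0 : size L0 = n.-1.
  rewrite size_sort -cardE /n (cardD1 p [pred b | shp b && I b]) inE sp Ip /=.
  rewrite add0n; apply: eq_card => b; rewrite !inE; by case: (b == p); rewrite ?andbT ?andbF.
have n0 : 0 < n by rewrite /n (cardD1 p) inE sp Ip.
split => //; last split.
- by rewrite -(card_uniqP uL); apply: eq_card => b; rewrite memL.
- by rewrite eL nth_cat sL0 ltnn subnn.
- rewrite eL nth_cat sL0 ltnNge leq_pred /= -{1}(prednK n0) subSnn. by [].
have keyb (b : B) : keyf I p q lex K b = grp I p q b * K + lex b by [].
have tr : transitive R by move=> y x z; rewrite /R; apply: leq_trans.
have tot : total R by move=> x y; rewrite /R leq_total.
rewrite eL pairwise_cat !pairwise_cons -!(sorted_pairwise tr) !sort_sorted // !andbT.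
have g0 b : b \in L0 -> grp I p q b = 0.
  by rewrite m0 /grp => /and3P[_ -> /negbTE ->].
have g3 b : b \in L3 -> grp I p q b = 3.
  by rewrite m3 /grp => /and3P[_ /negbTE -> /negbTE ->].
have gp : grp I p q p = 1 by rewrite /grp Ip eqxx.
have gq : grp I p q q = 2 by rewrite /grp (negbTE Iq) eqxx.
apply/and3P; split.
- apply/allrelP => x y /g0 gx; rewrite !in_cons => /or3P[/eqP->|/eqP->|/g3 gy];
    rewrite /R !keyb ?gx ?gp ?gq ?gy; have := hK x; have := hK p; have := hK q;
    try have := hK y; lia.
- by [].
- rewrite /=; apply/andP; split; first (apply/andP; split).
  + by rewrite /R !keyb gp gq; have := hK p; have := hK q; lia.
  + by apply/allP => y /g3 gy; rewrite /R !keyb ?gp ?gq gy;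
     have := hK p; have := hK q; have := hK y; lia.
  + by apply/allP => y /g3 gy; rewrite /R !keyb ?gp ?gq gy;
     have := hK p; have := hK q; have := hK y; lia.
Qed.


Lemma count_int n lo hi :
  \sum_(0 <= c < n) ((lo < c) && (c <= hi) : nat) = minn n hi.+1 - minn n lo.+1.
Proof.
elim: n => [|n IH]; first by rewrite big_geq.
rewrite big_nat_recr //= IH.
case: (ltnP lo n) => h1; case: (leqP n hi) => h2 /=; lia.
Qed.

Lemma ramif_mono r d (f : nat -> nat) : ramif r d f -> forall i j, i <= j -> j <= r -> f j <= f i.
Proof.
move=> [_ H] i j hij; elim: j hij => [|j IH] hij hj.
  by have -> : i = 0 by lia.
case: (ltnP i j.+1) => h.
  apply: leq_trans (H j hj) _; apply: IH; lia.
by have -> : i = j.+1 by lia.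
Qed.

Lemma card_shape g r d alpha beta : ramif r d alpha -> ramif r d beta ->
  #|[pred b : box g r d alpha beta | inshape b]| = r.+1 * mm g r d + wt r alpha + wt r beta.
Proof.
move=> ha hb.
transitivity (\sum_(k < r.+1) \sum_(c < ncol g r d alpha beta)
   ((alpha 0 - alpha (r - k) < c) && (c <= alpha 0 + mm g r d + beta k) : nat)).
  rewrite pair_big /= -sum1_card big_mkcond /=.
  by apply: eq_bigr => [[k c]] _; rewrite !inE /inshape /=; case: ifP.
transitivity (\sum_(k < r.+1) (mm g r d + beta k + alpha (r - k))).
  apply: eq_bigr => k _.
  rewrite -(big_mkord xpredT (fun c => ((alpha 0 - alpha (r - k) < c) && (c <= alpha 0 + mm g r d + beta k) : nat))).
  rewrite count_int /ncol.
  have h1 := ramif_mono ha (leq0n (r - k)) (leq_subr k r).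
  have h2 := ramif_mono hb (leq0n k) (ltnSE (ltn_ord k)).
  lia.
rewrite !big_split /= sum_nat_const card_ord /wt.
rewrite -addnA [X in _ + X]addnC addnA; congr (_ + _); congr (_ + _).
rewrite (reindex_inj rev_ord_inj) /=; apply: eq_bigr => k _.
by have hk := ltn_ord k; congr alpha; lia.
Qed.

Lemma rho_g g r d alpha beta :
  (0 <= g%:Z - d%:Z + r%:Z)%R -> rho g r d alpha beta = 0%R ->
  g = r.+1 * mm g r d + wt r alpha + wt r beta.
Proof.
rewrite /rho /mm => h1 h2.
have e : ((g + r - d)%:Z = g%:Z - d%:Z + r%:Z)%R by lia.
nia.
Qed.

Lemma hyp_m g r d (alpha beta : nat -> nat) :
  (0 <= g%:Z - d%:Z + r%:Z)%R ->
  ((r.+1)%:Z < (alpha r)%:Z + (beta r)%:Z + g%:Z - d%:Z + r%:Z)%R ->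
  r.+1 < alpha r + beta r + mm g r d.
Proof. rewrite /mm; lia. Qed.


Definition lexb g r d alpha beta (b : box g r d alpha beta) : nat :=
  val b.1 * ncol g r d alpha beta + val b.2.
Definition leb g r d alpha beta (b b' : box g r d alpha beta) : bool :=
  (val b.1 <= val b'.1) && (val b.2 <= val b'.2).

Lemma lexb_lt g r d alpha beta (b : box g r d alpha beta) :
  lexb b < r.+1 * ncol g r d alpha beta.
Proof.
rewrite /lexb; case: b => [k c] /=.
have := leq_mul (ltn_ord k) (leqnn (ncol g r d alpha beta)); rewrite mulSn.
have := ltn_ord c; lia.
Qed.

Lemma keyf_lt (B : eqType) (I : pred B) p q lex K (a b : B) :
  grp I p q a <= grp I p q b -> lex a < lex b -> keyf I p q lex K a < keyf I p q lex K b.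
Proof. rewrite /keyf => h1 h2; have := leq_mul h1 (leqnn K); lia. Qed.

Lemma build_syt g r d alpha beta (I : pred (box g r d alpha beta)) (p q : box g r d alpha beta) :
  #|[pred b : box g r d alpha beta | inshape b]| = g ->
  (forall b b', leb b b' -> I b' -> I b) ->
  (forall b, leb p b -> b != p -> ~~ I b) ->
  (forall b, leb b q -> b != q -> I b) ->
  inshape p -> inshape q -> I p -> ~~ I q ->
  let n := #|[pred b | inshape b && I b]| in
  0 < n < g /\ exists2 T, T \in YT g r d alpha beta & pos T n = p /\ pos T n.+1 = q.
Proof.
move=> hcard Hd Hp Hq sp sq Ip Iq n.
have [uL memL sL n0 [np nq pw]] :=
  Lbuild_props (@lexb_lt g r d alpha beta) sp sq Ip Iq.
set L := Lbuild _ _ _ _ _ _ in uL memL sL np nq pw.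
rewrite hcard in sL.
have ng : n < g.
  have := cardID I [pred b : box g r d alpha beta | inshape b].
  have := cardD1 q [predD [pred b : box g r d alpha beta | inshape b] & I].
  rewrite !inE sq Iq /= hcard.
  have -> : #|[predI [pred b | inshape b] & I]| = n by apply: eq_card => b; rewrite !inE.
  by move=> e1 <-; rewrite e1 addnCA addSn ltnS leq_addr.
split; first by rewrite n0 ng.
pose T : tableau g r d alpha beta := [ffun i : 'I_g => nth p L i].
have TE i : T i = nth p L i by rewrite ffunE.
have key_mono (i j : 'I_g) : leb (T i) (T j) -> T i != T j -> lexb (T i) < lexb (T j) -> i < j.
  move=> hl hn hlx.
  apply: (pairwise_idx (x0 := p) pw); rewrite ?sL ?ltn_ord //.
  rewrite -!TE; apply: keyf_lt => //.
  exact: (grp_mono Hd Hp Hq hl hn).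
exists T.
  rewrite inE /is_syt; apply/and5P; split.
  - apply/injectiveP => i j; rewrite !TE => e; apply/val_inj.
    by apply/eqP; rewrite -(nth_uniq p _ _ uL) ?sL ?ltn_ord // e.
  - by apply/forallP => i; rewrite TE -memL mem_nth // sL ltn_ord.
  - apply/forallP => b; apply/implyP => sb.
    have bL : b \in L by rewrite memL.
    have hi : index b L < g by move: (bL); rewrite -index_mem sL.
    by apply/codomP; exists (Ordinal hi); rewrite TE nth_index.
  - apply/forallP => i; apply/forallP => j; apply/implyP => /andP[/eqP e1 e2].
    apply: key_mono.
    + by rewrite /leb e1 leqnn (ltnW e2).
    + by apply/eqP => e; move: e2; rewrite e ltnn.
    + by rewrite /lexb e1 ltn_add2l.
  - apply/forallP => i; apply/forallP => j; apply/implyP => /andP[/eqP e1 e2].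
    apply: key_mono.
    + by rewrite /leb e1 leqnn (ltnW e2).
    + by apply/eqP => e; move: e2; rewrite e ltnn.
    + rewrite /lexb e1; have := ltn_ord (T i).2; nia.
split.
  rewrite /pos; case: insubP => [k _ hk|]; first by rewrite TE hk np.
  by rewrite (leq_ltn_trans (leq_pred n) ng).
rewrite /pos /=; case: insubP => [k _ hk|]; first by rewrite TE hk nq.
by rewrite ng.
Qed.


Definition mkbox g r d alpha beta (k c : nat) : box g r d alpha beta :=
  (inord k, @inord (alpha 0 + mm g r d + beta 0) c).

Lemma mkbox1 g r d alpha beta k c : k <= r -> val (@mkbox g r d alpha beta k c).1 = k.
Proof. by move=> h; rewrite /= inordK. Qed.
Lemma mkbox2 g r d alpha beta k c : c < ncol g r d alpha beta -> val (@mkbox g r d alpha beta k c).2 = c.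
Proof. by move=> h; rewrite /= inordK. Qed.

Lemma box_eqE g r d alpha beta (b : box g r d alpha beta) k c :
  k <= r -> c < ncol g r d alpha beta ->
  (b == mkbox g r d alpha beta k c) = (val b.1 == k) && (val b.2 == c).
Proof.
move=> hk hc; case: b => [i j] /=.
by rewrite xpair_eqE -!val_eqE /= !inordK.
Qed.

Definition sA (alpha : nat -> nat) := alpha 0 - alpha 2 + 1.

Definition cutf g r d alpha beta (a0 a1 a2 k : nat) : nat :=
  if k < r - 2 then ncol g r d alpha beta
  else if k == r - 2 then sA alpha + a0
  else if k == r - 1 then sA alpha + a1 else sA alpha + a2.

Definition inI g r d alpha beta (a0 a1 a2 : nat) (b : box g r d alpha beta) : bool :=
  val b.2 < cutf g r d alpha beta a0 a1 a2 (val b.1).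

Ltac cutcases :=
  rewrite /cutf; repeat (match goal with
  | |- context[if ?x < ?y then _ else _] => case: (ltnP x y) => ?
  | |- context[if ?x == ?y then _ else _] => case: (x =P y) => ?
  end); try lia.

Lemma inI_down g r d alpha beta a0 a1 a2 : a1 <= a0 -> a2 <= a1 ->
  forall b b' : box g r d alpha beta, leb b b' -> inI a0 a1 a2 b' -> inI a0 a1 a2 b.
Proof.
move=> h1 h2 [k c] [k' c'] /andP[/= hk hc]; rewrite /inI /=.
have := ltn_ord k'; have := ltn_ord c; move: hk hc.
move: (nat_of_ord k) (nat_of_ord k') (nat_of_ord c) (nat_of_ord c') => x x' y y' ????.
cutcases.
Qed.

Lemma config g r d alpha beta a0 a1 a2 kp cp kq cq :
  #|[pred b : box g r d alpha beta | inshape b]| = g -> a1 <= a0 -> a2 <= a1 ->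
  kp <= r -> kq <= r -> cp < ncol g r d alpha beta -> cq < ncol g r d alpha beta ->
  (forall k c, k <= r -> c < ncol g r d alpha beta -> kp <= k -> cp <= c ->
     (k != kp) || (c != cp) -> c < cutf g r d alpha beta a0 a1 a2 k -> False) ->
  (forall k c, k <= r -> c < ncol g r d alpha beta -> k <= kq -> c <= cq ->
     (k != kq) || (c != cq) -> c < cutf g r d alpha beta a0 a1 a2 k) ->
  cp < cutf g r d alpha beta a0 a1 a2 kp -> ~~ (cq < cutf g r d alpha beta a0 a1 a2 kq) ->
  inshape (mkbox g r d alpha beta kp cp) -> inshape (mkbox g r d alpha beta kq cq) ->
  let n := #|[pred b : box g r d alpha beta | inshape b && inI a0 a1 a2 b]| in
  0 < n < g /\ exists2 T, T \in YT g r d alpha beta &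
     pos T n = mkbox g r d alpha beta kp cp /\ pos T n.+1 = mkbox g r d alpha beta kq cq.
Proof.
move=> hcard h1 h2 hkp hkq hcp hcq Hp Hq ip iq sp sq n.
apply: build_syt => //.
- exact: inI_down.
- move=> [k c] hl; rewrite box_eqE // negb_and /inI /= => hn; apply/negP => hc.
  move: hl; rewrite /leb /= mkbox1 // mkbox2 // => /andP[l1 l2].
  exact: (Hp _ _ (ltnSE (ltn_ord k)) (ltn_ord c) l1 l2 hn hc).
- move=> [k c] hl; rewrite box_eqE // negb_and /inI /= => hn.
  move: hl; rewrite /leb /= mkbox1 // mkbox2 // => /andP[l1 l2].
  exact: (Hq _ _ (ltnSE (ltn_ord k)) (ltn_ord c) l1 l2 hn).
- by rewrite /inI mkbox1 // mkbox2.
- by rewrite /inI mkbox1 // mkbox2.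
Qed.

Lemma inblock g r d alpha beta j c :
  ramif r d alpha -> ramif r d beta -> 2 <= r -> r.+1 < alpha r + beta r + mm g r d ->
  j <= 2 -> sA alpha <= c <= sA alpha + 3 ->
  c < ncol g r d alpha beta /\ inshape (mkbox g r d alpha beta (r - j) c).
Proof.
move=> ha hb hr hm hj /andP[c1 c2].
have a20 := ramif_mono ha (leq0n 2) hr.
have a2j : alpha 2 <= alpha j := ramif_mono ha hj hr.
have ar2 := ramif_mono ha hr (leqnn r).
have brj : beta r <= beta (r - j) := ramif_mono hb (leq_subr j r) (leqnn r).
have bj0 := ramif_mono hb (leq0n (r - j)) (leq_subr j r).
have aj0 : alpha j <= alpha 0 := ramif_mono ha (leq0n j) (leq_trans hj hr).
move: c1 c2; rewrite /sA => c1 c2.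
have hc : c < ncol g r d alpha beta by rewrite /ncol; lia.
split => //.
rewrite /inshape mkbox1 ?leq_subr // mkbox2 //.
have -> : r - (r - j) = j by lia.
apply/andP; split; lia.
Qed.


Ltac splitcut :=
  rewrite /cutf; repeat (match goal with
  | |- context[if ?x < ?y then _ else _] => case: (ltnP x y) => ?
  | |- context[if ?x == ?y then _ else _] => case: (x =P y) => ?
  end).
Ltac beq := splitcut; repeat (match goal with |- context[?x < ?y] => case: (ltnP x y) => ? end);
  try done; exfalso; lia.

Ltac solve_max := move=> k c h1 h2 h3 h4 /orP[/eqP ?|/eqP ?]; cutcases.
Ltac solve_min := move=> k c h1 h2 h3 h4 /orP[/eqP ?|/eqP ?]; cutcases.

Lemma swap_card g r d alpha beta :
  ramif r d alpha -> ramif r d beta -> 2 <= r -> r.+1 < alpha r + beta r + mm g r d ->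
  #|[pred b : box g r d alpha beta | inshape b && inI 3 1 1 b]| =
  #|[pred b : box g r d alpha beta | inshape b && inI 3 2 0 b]|.
Proof.
move=> ha hb hr hm.
have [nx sx] := @inblock g r d alpha beta 0 (sA alpha) ha hb hr hm isT (ltac:(apply/andP; split; lia)).
have [ny sy] := @inblock g r d alpha beta 1 (sA alpha + 1) ha hb hr hm isT (ltac:(apply/andP; split; lia)).
rewrite subn0 in sx.
rewrite [LHS](cardD1 (mkbox g r d alpha beta r (sA alpha))) [RHS](cardD1 (mkbox g r d alpha beta (r - 1) (sA alpha + 1))).
have i1 : inI 3 1 1 (mkbox g r d alpha beta r (sA alpha)).
  by rewrite /inI mkbox1 // mkbox2 //; cutcases.
have i3 : inI 3 2 0 (mkbox g r d alpha beta (r - 1) (sA alpha + 1)).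
  by rewrite /inI mkbox1 ?leq_subr // mkbox2 //; cutcases.
rewrite !inE sx sy i1 i3.
rewrite /=; congr (_ + _); apply: eq_card => -[k c]; rewrite !inE /=.
rewrite !box_eqE ?leq_subr //=; case: (inshape _); rewrite ?andbF //= /inI /=.
have := ltn_ord k; have := ltn_ord c.
move: (nat_of_ord k) (nat_of_ord c) => x y ??.
case: (x =P r) => ?; case: (y =P sA alpha) => ?; case: (x =P r - 1) => ?;
  case: (y =P sA alpha + 1) => ? /=; beq.
Qed.


Lemma o1max g r d alpha beta : 2 <= r -> forall k c, k <= r -> c < ncol g r d alpha beta ->
  r <= k -> (sA alpha) <= c -> (k != r) || (c != (sA alpha)) -> c < cutf g r d alpha beta 3 1 1 k -> False.
Proof. move=> hr; solve_max. Qed.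
Lemma o1min g r d alpha beta : 2 <= r -> forall k c, k <= r -> c < ncol g r d alpha beta ->
  k <= (r - 2) -> c <= (sA alpha + 3) -> (k != (r - 2)) || (c != (sA alpha + 3)) -> c < cutf g r d alpha beta 3 1 1 k.
Proof. move=> hr; solve_min. Qed.
Lemma o1p g r d alpha beta : 2 <= r -> (sA alpha) < cutf g r d alpha beta 3 1 1 r.
Proof. move=> hr; cutcases. Qed.
Lemma o1q g r d alpha beta : 2 <= r -> ~~ ((sA alpha + 3) < cutf g r d alpha beta 3 1 1 (r - 2)).
Proof. move=> hr; rewrite -leqNgt; cutcases. Qed.

Lemma o2max g r d alpha beta : 2 <= r -> forall k c, k <= r -> c < ncol g r d alpha beta ->
  (r - 1) <= k -> (sA alpha + 1) <= c -> (k != (r - 1)) || (c != (sA alpha + 1)) -> c < cutf g r d alpha beta 3 2 0 k -> False.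
Proof. move=> hr; solve_max. Qed.
Lemma o2min g r d alpha beta : 2 <= r -> forall k c, k <= r -> c < ncol g r d alpha beta ->
  k <= r -> c <= (sA alpha) -> (k != r) || (c != (sA alpha)) -> c < cutf g r d alpha beta 3 2 0 k.
Proof. move=> hr; solve_min. Qed.
Lemma o2p g r d alpha beta : 2 <= r -> (sA alpha + 1) < cutf g r d alpha beta 3 2 0 (r - 1).
Proof. move=> hr; cutcases. Qed.
Lemma o2q g r d alpha beta : 2 <= r -> ~~ ((sA alpha) < cutf g r d alpha beta 3 2 0 r).
Proof. move=> hr; rewrite -leqNgt; cutcases. Qed.

Lemma o3max g r d alpha beta : 2 <= r -> forall k c, k <= r -> c < ncol g r d alpha beta ->
  (r - 2) <= k -> (sA alpha + 2) <= c -> (k != (r - 2)) || (c != (sA alpha + 2)) -> c < cutf g r d alpha beta 3 2 0 k -> False.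
Proof. move=> hr; solve_max. Qed.
Lemma o3min g r d alpha beta : 2 <= r -> forall k c, k <= r -> c < ncol g r d alpha beta ->
  k <= r -> c <= (sA alpha) -> (k != r) || (c != (sA alpha)) -> c < cutf g r d alpha beta 3 2 0 k.
Proof. move=> hr; solve_min. Qed.
Lemma o3p g r d alpha beta : 2 <= r -> (sA alpha + 2) < cutf g r d alpha beta 3 2 0 (r - 2).
Proof. move=> hr; cutcases. Qed.
Lemma o3q g r d alpha beta : 2 <= r -> ~~ ((sA alpha) < cutf g r d alpha beta 3 2 0 r).
Proof. move=> hr; rewrite -leqNgt; cutcases. Qed.

Lemma o4max g r d alpha beta : 2 <= r -> forall k c, k <= r -> c < ncol g r d alpha beta ->
  (r - 1) <= k -> (sA alpha + 1) <= c -> (k != (r - 1)) || (c != (sA alpha + 1)) -> c < cutf g r d alpha beta 3 2 0 k -> False.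
Proof. move=> hr; solve_max. Qed.
Lemma o4min g r d alpha beta : 2 <= r -> forall k c, k <= r -> c < ncol g r d alpha beta ->
  k <= (r - 2) -> c <= (sA alpha + 3) -> (k != (r - 2)) || (c != (sA alpha + 3)) -> c < cutf g r d alpha beta 3 2 0 k.
Proof. move=> hr; solve_min. Qed.
Lemma o4p g r d alpha beta : 2 <= r -> (sA alpha + 1) < cutf g r d alpha beta 3 2 0 (r - 1).
Proof. move=> hr; cutcases. Qed.
Lemma o4q g r d alpha beta : 2 <= r -> ~~ ((sA alpha + 3) < cutf g r d alpha beta 3 2 0 (r - 2)).
Proof. move=> hr; rewrite -leqNgt; cutcases. Qed.


Lemma card_disj (T : finType) (P Q : pred T) :
  (forall x, P x -> Q x -> False) -> #|[predU P & Q]| = #|P| + #|Q|.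
Proof.
move=> H; rewrite -cardUI.
have -> : #|[predI P & Q]| = 0.
  apply: eq_card0 => x; rewrite !inE; apply/negP => /andP[h1 h2]; exact: H h1 h2.
by rewrite addn0.
Qed.

Lemma pick4 (T : finType) (Y : pred T) (f : T -> nat) (M : nat -> pred T) (a1 a2 a3 a4 : nat) :
  uniq [:: a1; a2; a3; a4] ->
  (forall a x, M a x -> Y x /\ f x = a) ->
  exists2 a, a \in [:: a1; a2; a3; a4] & 4 * #|M a| <= #|Y|.
Proof.
move=> hu hM.
pose P a := [pred x | Y x && (f x == a)].
have hMP a : #|M a| <= #|P a|.
  apply: subset_leq_card; apply/subsetP => x; rewrite !inE => /hM[-> ->]; by rewrite eqxx.
have dj a b : a != b -> forall x, P a x -> P b x -> False.
  move=> ab x; rewrite !inE => /andP[_ /eqP e1] /andP[_ /eqP e2].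
  by move: ab; rewrite -e1 -e2 eqxx.
move: hu; rewrite /= !in_cons !negb_or !andbT => /andP[/and3P[n12 n13 n14] /andP[/andP[n23 n24] n34]].
have e1 := card_disj (dj _ _ n12).
have e2 : #|[predU [predU P a1 & P a2] & P a3]| = #|[predU P a1 & P a2]| + #|P a3|.
  apply: card_disj => x; rewrite !inE => /orP[] h1 h2.
    exact: (dj _ _ n13 x h1 h2).
  exact: (dj _ _ n23 x h1 h2).
have e3 : #|[predU [predU [predU P a1 & P a2] & P a3] & P a4]| =
          #|[predU [predU P a1 & P a2] & P a3]| + #|P a4|.
  apply: card_disj => x; rewrite !inE => /orP[/orP[]|] h1 h2.
  - exact: (dj _ _ n14 x h1 h2).
  - exact: (dj _ _ n24 x h1 h2).
  - exact: (dj _ _ n34 x h1 h2).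
have hY : #|[predU [predU [predU P a1 & P a2] & P a3] & P a4]| <= #|Y|.
  apply: subset_leq_card; apply/subsetP => x; rewrite !inE.
  by case/orP => [/orP[/orP[]|]|] /andP[].
have := hMP a1; have := hMP a2; have := hMP a3; have := hMP a4.
case: (leqP (4 * #|M a1|) #|Y|) => h1; first by move=> *; exists a1; rewrite ?mem_head.
case: (leqP (4 * #|M a2|) #|Y|) => h2; first by move=> *; exists a2; rewrite ?in_cons ?eqxx ?orbT.
case: (leqP (4 * #|M a3|) #|Y|) => h3; first by move=> *; exists a3; rewrite ?in_cons ?eqxx ?orbT.
case: (leqP (4 * #|M a4|) #|Y|) => h4; first by move=> *; exists a4; rewrite ?in_cons ?eqxx ?orbT.
have S : #|P a1| + #|P a2| + #|P a3| + #|P a4| <= #|Y| by rewrite -e1 -e2 -e3.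
move=> ????; exfalso; lia.
Qed.


Lemma piEH_cond g r d alpha beta t a (T : tableau g r d alpha beta) :
  piEH t a T != T ->
  [&& (pos T t).1 != (pos T t.+1).1, (pos T t).2 != (pos T t.+1).2 &
      dist (pos T t) (pos T t.+1) == a].
Proof. by rewrite /piEH; case: ifP => [|_]; [rewrite -andbA | rewrite eqxx]. Qed.

Lemma piEH_move g r d alpha beta t (T : tableau g r d alpha beta) kp cp kq cq :
  0 < t < g -> kp <= r -> kq <= r -> cp < ncol g r d alpha beta -> cq < ncol g r d alpha beta ->
  kp != kq -> cp != cq ->
  pos T t = mkbox g r d alpha beta kp cp -> pos T t.+1 = mkbox g r d alpha beta kq cq ->
  forall a, absd kp kq + absd cp cq = a -> piEH t a T != T.
Proof.
move=> /andP[t0 tg] hkp hkq hcp hcq nk nc ep eq a <-.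
have n1 : (pos T t).1 != (pos T t.+1).1.
  by rewrite ep eq -val_eqE !mkbox1.
have n2 : (pos T t).2 != (pos T t.+1).2.
  by rewrite ep eq -val_eqE (mkbox2 kp hcp) (mkbox2 kq hcq).
have hd : dist (pos T t) (pos T t.+1) = absd kp kq + absd cp cq.
  by rewrite /dist ep eq !mkbox1 // (mkbox2 kp hcp) (mkbox2 kq hcq).
have hk : t.-1 < g by lia.
have pk : pos T t = T (Ordinal hk).
  rewrite /pos; case: insubP => [k _ e|]; last by rewrite hk.
  by congr (T _); apply/val_inj.
rewrite /piEH n1 n2 hd eqxx /=.
apply/eqP => /ffunP/(_ (Ordinal hk)); rewrite ffunE /= eqxx -pk => e.
by move: n1; rewrite e eqxx.
Qed.

Lemma dist5 r s : 2 <= r -> absd r (r - 2) + absd s (s + 3) = 5.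
Proof. rewrite /absd; lia. Qed.
Lemma dist2 r s : 2 <= r -> absd (r - 1) r + absd (s + 1) s = 2.
Proof. rewrite /absd; lia. Qed.
Lemma dist4 r s : 2 <= r -> absd (r - 2) r + absd (s + 2) s = 4.
Proof. rewrite /absd; lia. Qed.
Lemma dist3 r s : 2 <= r -> absd (r - 1) (r - 2) + absd (s + 1) (s + 3) = 3.
Proof. rewrite /absd; lia. Qed.

Unset Implicit Arguments.
Import GRing.Theory Num.Theory.

Theorem lemma4p4 (g r d : nat) (alpha beta : nat -> nat) :
  ramif r d alpha -> ramif r d beta ->
  (0 <= g%:Z - d%:Z + r%:Z)%R ->
  rho g r d alpha beta = 0%R ->
  2 <= r ->
  ((r.+1)%:Z < (alpha r)%:Z + (beta r)%:Z + g%:Z - d%:Z + r%:Z)%R ->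
  exists t a : nat,
    [/\ 1 <= t < g, 0 < a,
        (exists2 T, T \in YT g r d alpha beta & piEH t a T != T) &
        4 * #|[set T in YT g r d alpha beta | piEH t a T != T]|
          <= #|YT g r d alpha beta|].
Proof.
move=> ha hb hgd hrho hr hineq.
have hm := hyp_m hgd hineq.
have hg := rho_g hgd hrho.
have hcard : #|[pred b : box g r d alpha beta | inshape b]| = g by rewrite card_shape // -hg.
have hsw := swap_card ha hb hr hm.
have bx := fun j c hj hc => @inblock g r d alpha beta j c ha hb hr hm hj hc.
have [n0 s0] := bx 0 (sA alpha) isT (ltac:(clear; apply/andP; split; lia)).
rewrite subn0 in s0.
have [n1 s1] := bx 1 (sA alpha + 1) isT (ltac:(clear; apply/andP; split; lia)).
have [n2 s2] := bx 2 (sA alpha + 2) isT (ltac:(clear; apply/andP; split; lia)).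
have [n3 s3] := bx 2 (sA alpha + 3) isT (ltac:(clear; apply/andP; split; lia)).
set t := #|[pred b : box g r d alpha beta | inshape b && inI 3 1 1 b]|.
have r2 : r - 2 <= r := leq_subr 2 r.
have r1 : r - 1 <= r := leq_subr 1 r.
have [tb [T1 Y1 [p1 q1]]] := @config g r d alpha beta 3 1 1 r (sA alpha) (r - 2) (sA alpha + 3)
  hcard isT isT (leqnn r) r2 n0 n3 (@o1max g r d alpha beta hr) (@o1min g r d alpha beta hr)
  (@o1p g r d alpha beta hr) (@o1q g r d alpha beta hr) s0 s3.
have [_ [T2 Y2 [p2 q2]]] := @config g r d alpha beta 3 2 0 (r - 1) (sA alpha + 1) r (sA alpha)
  hcard isT isT r1 (leqnn r) n1 n0 (@o2max g r d alpha beta hr) (@o2min g r d alpha beta hr)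
  (@o2p g r d alpha beta hr) (@o2q g r d alpha beta hr) s1 s0.
have [_ [T3 Y3 [p3 q3]]] := @config g r d alpha beta 3 2 0 (r - 2) (sA alpha + 2) r (sA alpha)
  hcard isT isT r2 (leqnn r) n2 n0 (@o3max g r d alpha beta hr) (@o3min g r d alpha beta hr)
  (@o3p g r d alpha beta hr) (@o3q g r d alpha beta hr) s2 s0.
have [_ [T4 Y4 [p4 q4]]] := @config g r d alpha beta 3 2 0 (r - 1) (sA alpha + 1) (r - 2) (sA alpha + 3)
  hcard isT isT r1 r2 n1 n3 (@o4max g r d alpha beta hr) (@o4min g r d alpha beta hr)
  (@o4p g r d alpha beta hr) (@o4q g r d alpha beta hr) s1 s3.
rewrite -hsw -/t in p2 q2 p3 q3 p4 q4.
rewrite -/t in tb p1 q1.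
have k1 : r != r - 2 by clear -hr; apply/eqP; lia.
have k2 : r - 1 != r by clear -hr; apply/eqP; lia.
have k3 : r - 2 != r by clear -hr; apply/eqP; lia.
have k4 : r - 1 != r - 2 by clear -hr; apply/eqP; lia.
have c1 : sA alpha != sA alpha + 3 by clear -hr; apply/eqP; lia.
have c2 : sA alpha + 1 != sA alpha by clear -hr; apply/eqP; lia.
have c3 : sA alpha + 2 != sA alpha by clear -hr; apply/eqP; lia.
have c4 : sA alpha + 1 != sA alpha + 3 by clear -hr; apply/eqP; lia.
have m1 := piEH_move tb (leqnn r) r2 n0 n3 k1 c1 p1 q1 (dist5 (sA alpha) hr).
have m2 := piEH_move tb r1 (leqnn r) n1 n0 k2 c2 p2 q2 (dist2 (sA alpha) hr).
have m3 := piEH_move tb r2 (leqnn r) n2 n0 k3 c3 p3 q3 (dist4 (sA alpha) hr).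
have m4 := piEH_move tb r1 r2 n1 n3 k4 c4 p4 q4 (dist3 (sA alpha) hr).

pose f (T : tableau g r d alpha beta) :=
  if ((pos T t).1 != (pos T t.+1).1) && ((pos T t).2 != (pos T t.+1).2)
  then dist (pos T t) (pos T t.+1) else 0.
pose M a := [pred T : tableau g r d alpha beta | (T \in YT g r d alpha beta) && (piEH t a T != T)].
have hM a T : M a T -> (T \in YT g r d alpha beta) /\ f T = a.
  rewrite inE => /andP[-> /piEH_cond /and3P[h1 h2 /eqP h3]]; split => //.
  by rewrite /f h1 h2 h3.
have [a ha4 ca] := @pick4 _ [pred T | T \in YT g r d alpha beta] f M 5 2 4 3 isT hM.
have eY : #|[pred T | T \in YT g r d alpha beta]| = #|YT g r d alpha beta| by apply: eq_card.
have eM : #|[set T in YT g r d alpha beta | piEH t a T != T]| = #|M a|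
  by apply: eq_card => T; rewrite !inE.
exists t, a; split => //.
- by move: ha4; rewrite !in_cons in_nil orbF => /or4P[] /eqP ->.
- by move: ha4; rewrite !in_cons in_nil orbF => /or4P[] /eqP ->;
    [exists T1 | exists T2 | exists T3 | exists T4].
- by rewrite eM -eY.
Qed.
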